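(* Let $\mathcal H_S,\mathcal H_E$ be finite-dimensional complex Hilbert spaces, $\Psi\in\mathcal H_S\otimes\mathcal H_E$ a unit vector, and $\{\phi_j\}_{j\in\mathcal I}$ a finite family of unit vectors in $\mathcal H_S$ such that $\Psi\in\mathrm{span}\{\phi_j\}\otimes\mathcal H_E$ (equivalently, $\rho_S=\mathrm{Tr}_E|\Psi\rangle\langle\Psi|$ is described by the $\phi_j$). Suppose $\Pr(\phi_j)>0$ for all $j$ and that the $\{\phi_j\}$ are indistinguishable relative to $E$. Then $\Psi=\Psi_S\otimes\Lambda$ for unit vectors $\Psi_S\in\mathrm{span}\{\phi_j\}$, $\Lambda\in\mathcal H_E$; in particular $\rho_S=|\Psi_S\rangle\langle\Psi_S|$ is pure, with $\Psi_S=\sum_{s\in\mathcal I}\psi_s\phi_s$ for some coefficients $\psi_s$.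
   Context: For the pure joint state $\Psi$ and unit vectors $\phi\in\mathcal H_S$, $\eta\in\mathcal H_E$: $\Pr(\phi)=\langle\phi|\rho_S|\phi\rangle$ with $\rho_S=\mathrm{Tr}_E|\Psi\rangle\langle\Psi|$, $\Pr(\phi\wedge\eta)=|\langle\phi\otimes\eta|\Psi\rangle|^2$, and $\Pr(\eta\mid\phi)=\Pr(\phi\wedge\eta)/\Pr(\phi)$. The state of $S$ is ''described by'' $\{\phi_j\}$ iff $\rho_S=\sum_{t,t'}w_{tt'}|\phi_t\rangle\langle\phi_{t'}|$ for some coefficients $w_{tt'}$. Values $\{\phi_j\}$ are indistinguishable relative to $E$ iff $\Pr(\eta\mid\phi_j)$ is independent of $j$ for every unit vector $\eta\in\mathcal H_E$. *)

(* Defs.v *)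
(* A vector Psi of H_S (x) H_E = C^n (x) C^m is its coefficient matrix
   Psi : 'M[C]_(n, m), Psi i k = coefficient of e_i (x) f_k. *)
From HB Require Import structures.
From mathcomp Require Import all_boot all_order all_algebra.
Set Implicit Arguments. Unset Strict Implicit. Unset Printing Implicit Defensive.
Import Order.TTheory GRing.Theory Num.Theory.
Local Open Scope ring_scope.

Section Defs.
Variable C : numClosedFieldType.

Definition adjmx {p q : nat} (A : 'M[C]_(p, q)) : 'M[C]_(q, p) :=
  (map_mx (fun x => x^*) A)^T.

Definition dotv {n : nat} (u v : 'cV[C]_n) : C := \sum_i (u i 0)^* * v i 0.

Definition unit_vec {n : nat} (u : 'cV[C]_n) : Prop := dotv u u = 1.

Definition unit_state {n m : nat} (Psi : 'M[C]_(n, m)) : Prop :=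
  \sum_i \sum_k (Psi i k)^* * Psi i k = 1.

Definition tensor {n m : nat} (u : 'cV[C]_n) (v : 'cV[C]_m) : 'M[C]_(n, m) :=
  u *m v^T.

(* reduced density matrix rho_S = Tr_E |Psi><Psi| *)
Definition rhoS {n m : nat} (Psi : 'M[C]_(n, m)) : 'M[C]_n := Psi *m adjmx Psi.

Definition Pr {n m : nat} (Psi : 'M[C]_(n, m)) (phi : 'cV[C]_n) : C :=
  (adjmx phi *m rhoS Psi *m phi) 0 0.

Definition inner_tensor {n m : nat} (Psi : 'M[C]_(n, m))
  (phi : 'cV[C]_n) (eta : 'cV[C]_m) : C :=
  \sum_i \sum_k (phi i 0)^* * (eta k 0)^* * Psi i k.

Definition Pr_and {n m : nat} (Psi : 'M[C]_(n, m))
  (phi : 'cV[C]_n) (eta : 'cV[C]_m) : C :=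
  (inner_tensor Psi phi eta)^* * inner_tensor Psi phi eta.

Definition Pr_cond {n m : nat} (Psi : 'M[C]_(n, m))
  (eta : 'cV[C]_m) (phi : 'cV[C]_n) : C :=
  Pr_and Psi phi eta / Pr Psi phi.

Definition described_by {n m : nat} {I : finType} (Psi : 'M[C]_(n, m))
  (phi : I -> 'cV[C]_n) : Prop :=
  exists w : I -> I -> C,
    rhoS Psi = \sum_t \sum_t' w t t' *: (phi t *m adjmx (phi t')).

Definition in_span_tensor {n m : nat} {I : finType} (Psi : 'M[C]_(n, m))
  (phi : I -> 'cV[C]_n) : Prop :=
  exists c : I -> 'cV[C]_m, Psi = \sum_t tensor (phi t) (c t).

Definition indistinguishable {n m : nat} {I : finType} (Psi : 'M[C]_(n, m))
  (phi : I -> 'cV[C]_n) : Prop :=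
  forall eta : 'cV[C]_m, unit_vec eta ->
    forall j j' : I, Pr_cond Psi eta (phi j) = Pr_cond Psi eta (phi j').

End Defs.

(* Main.v *)
Require Import Defs.
From HB Require Import structures.
From mathcomp Require Import all_boot all_order all_algebra.
From mathcomp Require Import ring.
Import Order.TTheory GRing.Theory Num.Theory.
Local Open Scope ring_scope.

Section H.
Variable C : numClosedFieldType.

Lemma adjmxE p q (A : 'M[C]_(p,q)) i j : adjmx A i j = (A j i)^*.
Proof. by rewrite /adjmx !mxE. Qed.

Lemma adjmxK p q (A : 'M[C]_(p,q)) : adjmx (adjmx A) = A.
Proof. by apply/matrixP=> i j; rewrite !adjmxE conjCK. Qed.

Lemma adjmxM p q r (A : 'M[C]_(p,q)) (B : 'M[C]_(q,r)) :
  adjmx (A *m B) = adjmx B *m adjmx A.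
Proof.
apply/matrixP=> i j; rewrite !adjmxE !mxE rmorph_sum; apply: eq_bigr => k _.
by rewrite !adjmxE rmorphM mulrC.
Qed.

Lemma adjmxD p q (A B : 'M[C]_(p,q)) : adjmx (A + B) = adjmx A + adjmx B.
Proof. by apply/matrixP=> i j; rewrite !adjmxE !mxE rmorphD. Qed.

Lemma adjmxN p q (A : 'M[C]_(p,q)) : adjmx (- A) = - adjmx A.
Proof. by apply/matrixP=> i j; rewrite !adjmxE !mxE rmorphN. Qed.

Lemma adjmxZ p q a (A : 'M[C]_(p,q)) : adjmx (a *: A) = a^* *: adjmx A.
Proof. by apply/matrixP=> i j; rewrite !adjmxE !mxE rmorphM. Qed.

Lemma adjmx0 p q : adjmx (0 : 'M[C]_(p,q)) = 0.
Proof. by apply/matrixP=> i j; rewrite adjmxE !mxE rmorph0. Qed.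

Lemma mul_adjmx_eq0 p q (A : 'M[C]_(p,q)) : A *m adjmx A = 0 -> A = 0.
Proof.
move=> H; apply/matrixP=> i j; rewrite mxE.
have := congr1 (fun M : 'M[C]_p => M i i) H; rewrite !mxE => Hs.
have Hs' : \sum_k A i k * (A i k)^* = 0.
  by rewrite -[RHS]Hs; apply: eq_bigr => k _; rewrite adjmxE.
have := @psumr_eq0P _ _ xpredT (fun k => A i k * (A i k)^*)
  (fun k _ => mul_conjC_ge0 (A i k)) Hs' j isT.
by move/eqP; rewrite mul_conjC_eq0 => /eqP.
Qed.

Lemma adjmx_mul_eq0 p q (A : 'M[C]_(p,q)) : adjmx A *m A = 0 -> A = 0.
Proof.
move=> H; rewrite -[A]adjmxK; have -> : adjmx A = 0; last by rewrite adjmx0.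
by apply: mul_adjmx_eq0; rewrite adjmxK.
Qed.

Definition ip {m} (u v : 'rV[C]_m) : C := (u *m adjmx v) 0 0.

Lemma ipE m (u v : 'rV[C]_m) : ip u v = \sum_k u 0 k * (v 0 k)^*.
Proof. by rewrite /ip mxE; apply: eq_bigr => k _; rewrite adjmxE. Qed.

Lemma ipZl m a (u v : 'rV[C]_m) : ip (a *: u) v = a * ip u v.
Proof. by rewrite /ip -scalemxAl mxE. Qed.

Lemma ipZr m a (u v : 'rV[C]_m) : ip u (a *: v) = a^* * ip u v.
Proof. by rewrite /ip adjmxZ -scalemxAr mxE. Qed.

Lemma ipDl m (u w v : 'rV[C]_m) : ip (u + w) v = ip u v + ip w v.
Proof. by rewrite /ip mulmxDl mxE. Qed.

Lemma ipNl m (u v : 'rV[C]_m) : ip (- u) v = - ip u v.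
Proof. by rewrite /ip mulNmx mxE. Qed.

Lemma ipDr m (u w v : 'rV[C]_m) : ip v (u + w) = ip v u + ip v w.
Proof. by rewrite /ip adjmxD mulmxDr mxE. Qed.

Lemma ipNr m (u v : 'rV[C]_m) : ip v (- u) = - ip v u.
Proof. by rewrite /ip adjmxN mulmxN mxE. Qed.

Lemma ip_conj m (u v : 'rV[C]_m) : ip v u = (ip u v)^*.
Proof.
rewrite !ipE rmorph_sum; apply: eq_bigr => k _.
by rewrite rmorphM /= conjCK mulrC.
Qed.

Lemma ip_eq0 m (u : 'rV[C]_m) : ip u u = 0 -> u = 0.
Proof.
move=> H; apply: mul_adjmx_eq0; apply/matrixP=> i k.
by rewrite !ord1 [RHS]mxE; exact: H.
Qed.

Lemma ip_ge0 m (u : 'rV[C]_m) : 0 <= ip u u.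
Proof. by rewrite ipE; apply: sumr_ge0 => k _; apply: mul_conjC_ge0. Qed.

Lemma ip11 m (L : 'rV[C]_m) : ip L L = 1 -> L *m adjmx L = 1%:M.
Proof. by move=> H; apply/matrixP=> i k; rewrite !ord1 [RHS]mxE /= mulr1n; exact: H. Qed.

End H.
Arguments ip {C m}.

Theorem theorem9 (C : numClosedFieldType) (n m : nat) (I : finType)
  (Psi : 'M[C]_(n, m)) (phi : I -> 'cV[C]_n) :
  unit_state Psi ->
  (forall j, unit_vec (phi j)) ->
  in_span_tensor Psi phi ->
  (forall j, 0 < Pr Psi (phi j)) ->
  indistinguishable Psi phi ->
  exists (PsiS : 'cV[C]_n) (Lambda : 'cV[C]_m) (psi : I -> C),
    [/\ unit_vec PsiS, unit_vec Lambda,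
        PsiS = \sum_s psi s *: phi s,
        Psi = tensor PsiS Lambda
      & rhoS Psi = PsiS *m adjmx PsiS].
Proof.
move=> Hu _ [c Hc] Hpos Hind.
case: (pickP (fun _ : I => true)) => [j0 _|Hn]; last first.
  exfalso; move: Hu; rewrite /unit_state.
  have -> : Psi = 0 by rewrite Hc big_pred0.
  rewrite big1 => [H|i _]; first by move: (oner_eq0 C); rewrite H eqxx.
  by rewrite big1 // => k _; rewrite mxE rmorph0 mul0r.
pose r j := adjmx (phi j) *m Psi.
have HPr j : Pr Psi (phi j) = ip (r j) (r j).
  by rewrite /Pr /rhoS /ip /r adjmxM adjmxK !mulmxA.
have Hin j (L : 'rV[C]_m) : inner_tensor Psi (phi j) L^T = ip (r j) L.
  rewrite /inner_tensor ipE exchange_big; apply: eq_bigr => k _.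
  rewrite /r mxE [in RHS]mxE mulr_suml; apply: eq_bigr => i _.
  rewrite adjmxE; ring.
set N := Pr Psi (phi j0).
have N0 : 0 < N := Hpos j0.
pose s := sqrtC N.
have s0 : 0 < s by rewrite sqrtC_gt0.
have sN : s * s = N by rewrite -expr2 sqrtCK.
have sc : s^-1^* = s^-1 by rewrite geC0_conj // invr_ge0 ltW.
have Nc : N^* = N by rewrite geC0_conj // ltW.
pose L := s^-1 *: r j0.
have LL : ip L L = 1.
  rewrite /L ipZl ipZr sc -HPr -/N -sN; field; exact: lt0r_neq0.
have HuL : unit_vec L^T.
  by rewrite /unit_vec /dotv -LL ipE; apply: eq_bigr => k _; rewrite !mxE mulrC.
have Hcond j : Pr_and Psi (phi j) L^T = Pr Psi (phi j).
  have := Hind _ HuL j j0; rewrite /Pr_cond.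
  have -> : Pr_and Psi (phi j0) L^T = N.
    rewrite /Pr_and Hin /L ipZr sc -HPr -/N rmorphM /= sc Nc -sN.
    field; exact: lt0r_neq0.
  rewrite divff ?(lt0r_neq0 N0) // => H.
  have Pj := lt0r_neq0 (Hpos j).
  by move/(congr1 (fun x => x * Pr Psi (phi j))): H; rewrite mul1r divfK.
have Hr j : r j = (ip (r j) (r j0) / N * s) *: L.
  have Hc' := Hcond j.
  rewrite /Pr_and Hin ipZr sc rmorphM /= sc HPr in Hc'.
  have r0L : r j0 = s *: L by rewrite /L scalerA mulfV ?scale1r // lt0r_neq0.
  rewrite -scalerA -r0L; apply/eqP; rewrite -subr_eq0; apply/eqP; apply: ip_eq0.
  rewrite ipDl !ipDr !ipNl !ipNr !ipZl !ipZr (@ip_conj _ _ (r j) (r j0)) in Hc' *.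
  rewrite -(HPr j0) -/N rmorphM fmorphV /= Nc -Hc' -sN.
  field; exact: lt0r_neq0.
clearbody L.
have LaL : L *m adjmx L = 1%:M := @ip11 _ _ L LL.
pose x := Psi *m adjmx L.
have HQ : Psi = x *m L.
  pose Q := Psi - x *m L.
  have HQt t : adjmx (phi t) *m Q = 0.
    rewrite /Q mulmxBr /x !mulmxA.
    change (adjmx (phi t) *m Psi) with (r t).
    by rewrite Hr -!scalemxAl LaL mul1mx subrr.
  have HQ' : Q = Psi *m (1%:M - adjmx L *m L) by rewrite /Q /x mulmxBr mulmx1 mulmxA.
  have : adjmx Q *m Q = 0.
    rewrite {2}HQ' mulmxA Hc mulmx_sumr big1 ?mul0mx // => t _.
    rewrite /tensor mulmxA -[adjmx Q *m phi t]adjmxK adjmxM adjmxK HQt adjmx0.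
    by rewrite mul0mx.
  by move/adjmx_mul_eq0 => /eqP; rewrite subr_eq0 => /eqP.
have Hx : x = \sum_t ((c t)^T *m adjmx L) 0 0 *: phi t.
  rewrite /x Hc mulmx_suml; apply: eq_bigr => t _.
  by rewrite /tensor -mulmxA {1}[(c t)^T *m _]mx11_scalar mul_mx_scalar.
clearbody x.
exists x, L^T, (fun t => ((c t)^T *m adjmx L) 0 0); split => //.
- move: Hu; rewrite /unit_state /unit_vec /dotv HQ => <-.
  apply: eq_bigr => i _.
  have L1 : \sum_k (L 0 k)^* * L 0 k = 1.
    by rewrite -LL ipE; apply: eq_bigr => k _; rewrite mulrC.
  rewrite -[LHS]mulr1 -L1 mulr_sumr; apply: eq_bigr => k _.
  rewrite !mxE !big_ord1 rmorphM /=; ring.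
- by rewrite /tensor trmxK.
- by rewrite /rhoS HQ adjmxM !mulmxA -(mulmxA x L) LaL mulmx1.
Qed.
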